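(* Let $H(x,p)=\frac12(H_{11}p^2+2H_{12}px+H_{22}x^2)$ with real coefficients, $H_{11}\neq0$ and $H_{11}H_{22}-H_{12}^2<0$. Let $f(p,x)=\beta xp+\frac\gamma2x^2$ with $$\beta=\tfrac12\log|H_{11}|,\qquad\gamma=\frac{H_{12}}{H_{11}}\frac{\beta}{\sinh\beta}e^{\beta}.$$ Then $$\exp(X_f)H=\frac12\frac{H_{11}}{|H_{11}|}\left(p^2+\det(\mathrm{Hess}(H))\,x^2\right),$$ where $\det(\mathrm{Hess}(H))=H_{11}H_{22}-H_{12}^2$.
   Context: On $\mathbb R^2$ with coordinates $(x,p)$, the Hamiltonian vector field of $f$ is $X_f=\frac{\partial f}{\partial p}\partial_x-\frac{\partial f}{\partial x}\partial_p$ (here $X_f=\beta x\partial_x-(\beta p+\gamma x)\partial_p$). For a function $g$, $\exp(sX_f)g$ denotes $g\circ\Phi_s$ where $\Phi_s$ is the time-$s$ flow of $X_f$; $\exp(X_f)g$ is the case $s=1$. *)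

(* Defs.v *)
From Stdlib Require Import Reals Lra.
From Coquelicot Require Import Coquelicot.
Open Scope R_scope.

(* Hamiltonian vector field on R^2 with coordinates (x,p):
   X_f = (df/dp) d_x - (df/dx) d_p, returned as the pair of components. *)
Definition ham_vf (f : R -> R -> R) (z : R * R) : R * R :=
  (Derive (fun q => f (fst z) q) (snd z), - Derive (fun y => f y (snd z)) (fst z)).

Definition is_flow (V : R * R -> R * R) (Phi : R -> R * R -> R * R) : Prop :=
  forall z : R * R,
    Phi 0 z = z /\
    forall s : R,
      is_derive (fun t => fst (Phi t z)) s (fst (V (Phi s z))) /\
      is_derive (fun t => snd (Phi t z)) s (snd (V (Phi s z))).

(* exp(s X_f) g := g o Phi_s *)
Definition exp_flow (Phi : R -> R * R -> R * R) (s : R) (g : R * R -> R) : R * R -> R :=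
  fun z => g (Phi s z).

(* beta / sinh beta, extended continuously by 1 at beta = 0. *)
Definition b_over_sinh (b : R) : R := if Req_EM_T b 0 then 1 else b / sinh b.

(* Main.v *)
Require Import Defs.
From Stdlib Require Import Reals Lra.
From Coquelicot Require Import Coquelicot.
Open Scope R_scope.

Lemma const0 (g : R -> R) : (forall t, is_derive g t 0) -> forall t, g t = g 0.
Proof.
  intros Hd t.
  destruct (MVT_gen g 0 t (fun _ => 0)) as [c [_ Hc]].
  - intros; apply Hd.
  - intros x _. apply continuity_pt_filterlim. apply (ex_derive_continuous (K:=R_AbsRing) (V:=R_NormedModule)).
    eexists; apply Hd.
  - lra.
Qed.

Lemma is_derive_eq (g : R -> R) t l l' : is_derive g t l -> l = l' -> is_derive g t l'.
Proof. intros; subst; auto. Qed.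

Theorem lemma4p5 (H11 H12 H22 : R) (Phi : R -> R * R -> R * R) :
  H11 <> 0 ->
  H11 * H22 - H12 ^ 2 < 0 ->
  let H : R * R -> R := fun z =>
    / 2 * (H11 * (snd z) ^ 2 + 2 * H12 * (snd z) * (fst z) + H22 * (fst z) ^ 2) in
  let beta := / 2 * ln (Rabs H11) in
  let gamma := H12 / H11 * b_over_sinh beta * exp beta in
  let f : R -> R -> R := fun x p => beta * x * p + gamma / 2 * x ^ 2 in
  is_flow (ham_vf f) Phi ->
  forall z : R * R,
    exp_flow Phi 1 H z =
    / 2 * (H11 / Rabs H11) * ((snd z) ^ 2 + (H11 * H22 - H12 ^ 2) * (fst z) ^ 2).
Proof.
  intros H11n _ H beta gamma f Hfl z.
  assert (Hvf : forall w, ham_vf f w = (beta * fst w, - (beta * snd w + gamma * fst w))).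
  { intros w. unfold ham_vf, f. f_equal; [|f_equal]; apply is_derive_unique;
    auto_derive; auto. all: try ring. all: field. }
  destruct (Hfl z) as [H0 Hd].
  set (X := fun t => fst (Phi t z)).
  set (P := fun t => snd (Phi t z)).
  assert (HX : forall t, is_derive X t (beta * X t)).
  { intros t. destruct (Hd t) as [h _]. rewrite Hvf in h. exact h. }
  assert (HP : forall t, is_derive P t (- (beta * P t + gamma * X t))).
  { intros t. destruct (Hd t) as [_ h]. rewrite Hvf in h. exact h. }
  set (x0 := fst z). set (p0 := snd z).
  assert (X0 : X 0 = x0) by (unfold X; rewrite H0; reflexivity).
  assert (P0 : P 0 = p0) by (unfold P; rewrite H0; reflexivity).
  assert (HXt : forall t, X t = x0 * exp (beta * t)).
  { intros t.
    assert (C : X t * exp (- beta * t) = X 0 * exp (- beta * 0)).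
    { apply (const0 (fun t => X t * exp (- beta * t))). 
      intros s. eapply is_derive_eq.
      + apply (is_derive_mult X (fun t => exp (- beta * t))). apply HX.
        assert (is_derive (fun t => exp (- beta * t)) s (- beta * exp (-beta * s)))
          by (auto_derive; auto; ring). exact H1.
        intros; apply Rmult_comm.
      + simpl. unfold mult, plus; simpl. ring. }
    rewrite X0 in C. replace (- beta * 0) with 0 in C by ring. rewrite exp_0 in C.
    apply (Rmult_eq_reg_r (exp (- beta * t))). 2: apply Rgt_not_eq, exp_pos.
    rewrite C, Rmult_assoc, <- exp_plus.
    replace (beta * t + - beta * t) with 0 by ring. rewrite exp_0. ring. }
  set (E := exp beta).
  assert (Epos : 0 < E) by apply exp_pos.
  assert (HX1 : X 1 = x0 * E) by (rewrite HXt, Rmult_1_r; reflexivity).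
  assert (HP1 : P 1 = p0 / E - H12 / H11 * E * x0).
  { destruct (Req_EM_T beta 0) as [b0|b0].
    - assert (C : P 1 + gamma * x0 * 1 = P 0 + gamma * x0 * 0).
      { apply (const0 (fun t => P t + gamma * x0 * t)).
        intros s. eapply is_derive_eq.
        + apply (is_derive_plus P (fun t => gamma * x0 * t)). apply HP.
          assert (is_derive (fun t => gamma * x0 * t) s (gamma * x0))
            by (auto_derive; auto; ring). exact H1.
        + unfold plus; simpl. rewrite HXt, b0. rewrite !Rmult_0_l, exp_0. ring. }
      assert (gamma = H12 / H11) as Hg.
      { unfold gamma, b_over_sinh. destruct (Req_EM_T beta 0); [|contradiction].
        rewrite b0, exp_0. ring. }
      assert (E = 1) as HE by (unfold E; rewrite b0; apply exp_0).
      rewrite HE, <- Hg, <- P0. field_simplify. lra.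
    - assert (C : P 1 * exp (beta * 1) + gamma * x0 * (exp (beta * 1) * exp (beta * 1)) / (2 * beta)
                = P 0 * exp (beta * 0) + gamma * x0 * (exp (beta * 0) * exp (beta * 0)) / (2 * beta)).
      { apply (const0 (fun t => P t * exp (beta * t) + gamma * x0 * (exp (beta * t) * exp (beta * t)) / (2 * beta))).
        intros s. eapply is_derive_eq.
        + apply (is_derive_plus (fun t => P t * exp (beta * t))
                   (fun t => gamma * x0 * (exp (beta * t) * exp (beta * t)) / (2 * beta))).
          apply (is_derive_mult P (fun t => exp (beta * t))). apply HP.
          assert (is_derive (fun t => exp (beta * t)) s (beta * exp (beta * s)))
            by (auto_derive; auto; ring). exact H1.
          intros; apply Rmult_comm.
          assert (is_derive (fun t => gamma * x0 * (exp (beta * t) * exp (beta * t)) / (2 * beta)) s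
                    (gamma * x0 * exp (beta * s) * exp (beta * s)))
            by (auto_derive; auto; field; auto). exact H1.
        + unfold plus, mult; simpl. rewrite HXt. ring. }
      rewrite Rmult_0_r, exp_0, Rmult_1_r, P0 in C.
      fold E in C.
      assert (Hem : exp (- beta) = / E) by (unfold E; apply exp_Ropp).
      assert (HE1 : E - / E <> 0).
      { intro Hc. assert (E * E = 1).
        { assert (E = / E) as Hq by lra. rewrite Hq at 1. field. lra. }
        assert (E = 1) by nra. apply b0. apply exp_inv. rewrite exp_0. exact H2. }
      assert (Hg : gamma = H12 / H11 * (beta / ((E - / E) / 2)) * E).
      { unfold gamma, b_over_sinh. destruct (Req_EM_T beta 0); [contradiction|].
        unfold sinh. rewrite Hem. reflexivity. }
      assert (P 1 = (p0 + gamma * x0 * 1 / (2 * beta) - gamma * x0 * (E * E) / (2 * beta)) / E) as HP1'.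
      { apply (Rmult_eq_reg_r E). 2: lra.
        replace ((p0 + gamma * x0 * 1 / (2 * beta) - gamma * x0 * (E * E) / (2 * beta)) / E * E)
          with (p0 + gamma * x0 * 1 / (2 * beta) - gamma * x0 * (E * E) / (2 * beta)) by (field; lra).
        rewrite !Rmult_1_r in C |- *. lra. }
      rewrite HP1', Hg. field. repeat split; auto; try lra.
      intro Hc. apply HE1. replace (E - / E) with ((E * E - 1) / E) by (field; lra). rewrite Hc. field. lra. }
  assert (HA : Rabs H11 = E * E).
  { unfold E. rewrite <- exp_plus. replace (beta + beta) with (ln (Rabs H11)) by (unfold beta; field).
    rewrite exp_ln; auto. apply Rabs_pos_lt; auto. }
  unfold exp_flow, H. fold (X 1) (P 1). fold x0 p0. rewrite HX1, HP1, HA.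
  assert (E <> 0) by lra.
  destruct (Rcase_abs H11) as [Hn|Hn].
  - rewrite Rabs_left in HA; auto.
    replace H11 with (- (E * E)) by lra. field. auto.
  - rewrite Rabs_right in HA; auto.
    rewrite HA. field. auto.
Qed.
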